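(* Let $(\mathfrak L,\mathfrak g)$ be a Lie algebra pair over a field $\mathbb K$ of characteristic zero ($\mathfrak L$ a finite-dimensional Lie algebra, $\mathfrak g\subset\mathfrak L$ a Lie subalgebra), and let $V$ be the two-term complex $V^0=\mathfrak L\xrightarrow{d^V=\operatorname{pr}_{\mathfrak L/\mathfrak g}}V^1=\mathfrak L/\mathfrak g$, a dg $\mathfrak g$-module with $x\triangleright m=[x,m]_{\mathfrak L}$ on $\mathfrak L$ and $x\triangleright\operatorname{pr}_{\mathfrak L/\mathfrak g}(m)=\operatorname{pr}_{\mathfrak L/\mathfrak g}([x,m]_{\mathfrak L})$ on $\mathfrak L/\mathfrak g$. For any splitting $(j,\operatorname{pr}_{\mathfrak g})$ of $0\to\mathfrak g\xrightarrow{i}\mathfrak L\to\mathfrak L/\mathfrak g\to0$ (linear maps $j\colon\mathfrak L/\mathfrak g\to\mathfrak L$, $\operatorname{pr}_{\mathfrak g}\colon\mathfrak L\to\mathfrak g$ with $\operatorname{pr}_{\mathfrak g}\circ i=\mathrm{id}$, $\operatorname{pr}_{\mathfrak L/\mathfrak g}\circ j=\mathrm{id}$, $i\circ\operatorname{pr}_{\mathfrak g}+j\circ\operatorname{pr}_{\mathfrak L/\mathfrak g}=\mathrm{id}_{\mathfrak L}$), the maps $\alpha_0=\operatorname{pr}_{\mathfrak g}\colon V^0\to\mathfrak g$ and $\alpha_1\colon V^1\otimes\mathfrak g\to\mathfrak g$, $\alpha_1(b\mid x)=\operatorname{pr}_{\mathfrak g}([j(b),i(x)]_{\mathfrak L})$,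 define a dg Loday–Pirashvili module $(V,\alpha)$, and the resulting dg Loday–Pirashvili class $(V,[\alpha])$ is independent of the choice of splitting (hence canonical). Moreover, it is sent by $\mathbf H^0$ to the Loday–Pirashvili module $\mathbf H^0(V)\xrightarrow{\mathbf H^0(\alpha)}\mathfrak g$, where $\mathbf H^0(V)=\ker(d^V_0)=\mathfrak g$ and $\mathbf H^0(\alpha)$ is the identity map of $\mathfrak g$.
   Context: $\Omega_{\mathfrak g}(S)=\wedge^\bullet\mathfrak g^\vee\otimes S$ (degree $p+q$ on $\wedge^p\mathfrak g^\vee\otimes S^q$) for a dg $\mathfrak g$-module $S$, with total differential $d^S_{\mathrm{tot}}=d^S_{\mathrm{CE}}+d^S$, $d^S(\omega\otimes s)=(-1)^p\omega\otimes d^Ss$. A dg Loday–Pirashvili module $(V,\alpha)$ is a non-negative bounded dg $\mathfrak g$-module $V$ with a degree $0$ $\Omega_{\mathfrak g}$-linear map $\alpha\colon\Omega_{\mathfrak g}(V)\to\Omega_{\mathfrak g}(\mathfrak g)$ ($\mathfrak g$ in degree $0$ with adjoint action) satisfying $\alpha\circ d^V_{\mathrm{tot}}=d^{\mathfrak g}_{\mathrm{CE}}\circ\alpha$; it is generated by components $\alpha_k\colon V^k\to\wedge^k\mathfrak g^\vee\otimes\mathfrak g$, equivalently $\alpha_k\colon V^k\otimes\wedge^k\mathfrak g\to\mathfrak g$. Two such $\alpha,\alpha'$ on $V$ are homotopic if $\alpha'-\alpha=d^{\mathfrak g}_{\mathrm{CE}}\circ h+h\circ d^V_{\mathrm{tot}}$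 for some degree $-1$ $\Omega_{\mathfrak g}$-linear $h$; $(V,[\alpha])$ denotes $V$ with the homotopy class of $\alpha$. A Loday–Pirashvili module is a $\mathfrak g$-module $G$ with a $\mathfrak g$-equivariant linear map $X\colon G\to\mathfrak g$. $\mathbf H^0$ sends $(V,[\alpha])$ to $(\ker d^V_0,\alpha_0|_{\ker d^V_0})$. *)

(* Defs.v *)
From HB Require Import structures.
From mathcomp Require Import all_boot all_order all_algebra.
Set Implicit Arguments. Unset Strict Implicit. Unset Printing Implicit Defensive.
Import GRing.Theory.
Local Open Scope ring_scope.

Definition is_lie_bracket (K : fieldType) (L : lmodType K) (br : L -> L -> L) : Prop :=
  [/\ forall (a : K) x y z, br (a *: x + y) z = a *: br x z + br y z,
      forall (a : K) x y z, br z (a *: x + y) = a *: br z x + br z y,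
      forall x, br x x = 0
    & forall x y z, br x (br y z) + br y (br z x) + br z (br x y) = 0].

(* g-valued cochains  (elements of  wedge^k g^v (x) g)                 *)
(* A k-cochain is a function of an infinite argument list x : nat -> G *)
(* depending only on x 0, ..., x (k-1), multilinear and alternating.   *)
Section Cochains.
Variables (K : fieldType) (G : lmodType K) (brG : G -> G -> G).

Definition setarg (x : nat -> G) (n : nat) (u : G) : nat -> G :=
  fun m => if m == n then u else x m.

Definition cochain (k : nat) (c : (nat -> G) -> G) : Prop :=
  [/\ forall x y, (forall n, (n < k)%N -> x n = y n) -> c x = c y,
      forall n, (n < k)%N -> forall x (a : K) u w,
        c (setarg x n (a *: u + w)) = a *: c (setarg x n u) + c (setarg x n w)
    & forall n m x, (n < m)%N -> (m < k)%N -> x n = x m -> c x = 0].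

Definition skip1 (x : nat -> G) (i : nat) : nat -> G := fun n => x (bump i n).

(* ([x_i, x_j], x_0, .., ^x_i, .., ^x_j, ..)   for i < j *)
Definition skip2_br (x : nat -> G) (i j : nat) : nat -> G :=
  fun n => if n is n'.+1 then x (bump i (bump j.-1 n')) else brG (x i) (x j).

Definition dCE (k : nat) (c : (nat -> G) -> G) : (nat -> G) -> G := fun x =>
  \sum_(i < k.+1) (-1) ^+ i *: brG (x i) (c (skip1 x i))
  + \sum_(i < k.+1) \sum_(j < k.+1 | (i < j)%N) (-1) ^+ (i + j) *: c (skip2_br x i j).
End Cochains.

Section DgLP.
Variables (K : fieldType) (G : lmodType K) (brG : G -> G -> G).
Unset Implicit Arguments.
Variables (V : nat -> lmodType K) (d : forall k, V k -> V k.+1)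
          (act : forall k, G -> V k -> V k).
Set Implicit Arguments.

Definition dg_module : Prop :=
  [/\ (forall k (a : K) u v, d k (a *: u + v) = a *: d k u + d k v) /\
      (forall k v, d k.+1 (d k v) = 0),
      (forall k x (a : K) u v, act k x (a *: u + v) = a *: act k x u + act k x v) /\
      (forall k v (a : K) x y, act k (a *: x + y) v = a *: act k x v + act k y v),
      forall k x y v, act k (brG x y) v = act k x (act k y v) - act k y (act k x v),
      forall k x v, d k (act k x v) = act k.+1 x (d k v)
    & exists N, forall k, (N <= k)%N -> forall v : V k, v = 0].

(* The components alpha_k : V^k -> wedge^k g^v (x) g of a degree 0
   Omega_g-linear map Omega_g(V) -> Omega_g(g). *)
Definition omega_map_components (alpha : forall k, V k -> (nat -> G) -> G) : Prop :=
  forall k, (forall (a : K) u v x, alpha k (a *: u + v) x = a *: alpha k u x + alpha k v x)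
            /\ (forall v, cochain k (alpha k v)).

(* alpha o d^V_tot = d_CE o alpha, evaluated on the generators 1 (x) v *)
Definition dg_LP_module (alpha : forall k, V k -> (nat -> G) -> G) : Prop :=
  [/\ dg_module, omega_map_components alpha &
      forall k (v : V k) x,
        alpha k.+1 (d k v) x
        + \sum_(i < k.+1) (-1) ^+ i *: alpha k (act k (x i) v) (skip1 x i)
        = dCE brG k (alpha k v) x].

(* h : degree -1 Omega_g-linear map (Koszul sign convention), with
   components h_{k+1} : V^{k+1} -> wedge^k g^v (x) g ; h_0 = 0. *)
Definition homotopy_rhs (h : forall k, V k.+1 -> (nat -> G) -> G) (k : nat) :
    V k -> (nat -> G) -> G :=
  match k return V k -> (nat -> G) -> G with
  | 0 => fun v x => h 0%N (d 0%N v) x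
  | m.+1 => fun v x =>
      h m.+1 (d m.+1 v) x + dCE brG m (h m v) x
      - \sum_(i < m.+1) (-1) ^+ i *: h m (act m.+1 (x i) v) (skip1 x i)
  end.

Definition homotopic (alpha alpha' : forall k, V k -> (nat -> G) -> G) : Prop :=
  exists h : forall k, V k.+1 -> (nat -> G) -> G,
    (forall k, (forall (a : K) u v x, h k (a *: u + v) x = a *: h k u x + h k v x)
               /\ (forall v, cochain k (h k v))) /\
    forall k (v : V k) x, alpha' k v x - alpha k v x = homotopy_rhs h v x.
End DgLP.

Section TwoTerm.
Variables (K : fieldType) (L G Q : vectType K).
Variables (brL : L -> L -> L) (i : {linear G -> L}) (p : {linear L -> Q})
          (actQ : G -> Q -> Q).

Definition V2 (k : nat) : lmodType K :=
  match k with 0 => (L : lmodType K) | 1 => (Q : lmodType K) | _ => ('rV[K]_0 : lmodType K) end.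

Definition d2 (k : nat) : V2 k -> V2 k.+1 :=
  match k return V2 k -> V2 k.+1 with
  | 0 => fun m => p m
  | _ => fun _ => 0
  end.

Definition act2 (k : nat) : G -> V2 k -> V2 k :=
  match k return G -> V2 k -> V2 k with
  | 0 => fun x m => brL (i x) m
  | 1 => fun x q => actQ x q
  | _ => fun _ _ => 0
  end.

Definition alpha2 (j : Q -> L) (prg : L -> G) (k : nat) : V2 k -> (nat -> G) -> G :=
  match k return V2 k -> (nat -> G) -> G with
  | 0 => fun m _ => prg m
  | 1 => fun b x => prg (brL (j b) (i (x 0%N)))
  | _ => fun _ _ => 0
  end.

Definition is_splitting (j : {linear Q -> L}) (prg : {linear L -> G}) : Prop :=
  [/\ forall x, prg (i x) = x,
      forall q, p (j q) = q
    & forall m, i (prg m) + j (p m) = m].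
End TwoTerm.

Arguments d2 {K L Q} p k _.
Arguments act2 {K L G Q} brL i actQ k _ _.
Arguments alpha2 {K L G Q} brL i j prg k _ _.

(* Main.v *)
Require Import Defs.
From HB Require Import structures.
From mathcomp Require Import all_boot all_order all_algebra.
Import GRing.Theory.
Set Implicit Arguments.
Local Open Scope ring_scope.

Section LieFacts.
Variables (K : fieldType) (L : lmodType K) (br : L -> L -> L).
Hypothesis lie : is_lie_bracket br.

Lemma br0l z : br 0 z = 0.
Proof. case: lie => Hl _ _ _. have := Hl (-1) z z z.
by rewrite scaleN1r addNr scaleN1r addNr. Qed.
Lemma br0r z : br z 0 = 0.
Proof. case: lie => _ Hr _ _. have := Hr (-1) z z z.
by rewrite scaleN1r addNr scaleN1r addNr. Qed.
Lemma brDl x y z : br (x + y) z = br x z + br y z.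
Proof. case: lie => Hl _ _ _. by have := Hl 1 x y z; rewrite !scale1r. Qed.
Lemma brDr x y z : br z (x + y) = br z x + br z y.
Proof. case: lie => _ Hr _ _. by have := Hr 1 x y z; rewrite !scale1r. Qed.
Lemma brZl a x z : br (a *: x) z = a *: br x z.
Proof. case: lie => Hl _ _ _. by have := Hl a x 0 z; rewrite addr0 br0l addr0. Qed.
Lemma brZr a x z : br z (a *: x) = a *: br z x.
Proof. case: lie => _ Hr _ _. by have := Hr a x 0 z; rewrite addr0 br0r addr0. Qed.
Lemma brNl x z : br (- x) z = - br x z.
Proof. by rewrite -scaleN1r brZl scaleN1r. Qed.
Lemma brNr x z : br z (- x) = - br z x.
Proof. by rewrite -scaleN1r brZr scaleN1r. Qed.
Lemma brBl x y z : br (x - y) z = br x z - br y z.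
Proof. by rewrite brDl brNl. Qed.
Lemma brBr x y z : br z (x - y) = br z x - br z y.
Proof. by rewrite brDr brNr. Qed.
Lemma br_anti x y : br x y = - br y x.
Proof. case: lie => _ _ H0 _. have := H0 (x + y).
rewrite brDl !brDr !H0 add0r addr0 => /eqP; rewrite addr_eq0 => /eqP //. Qed.
Lemma br_jac a b n : br (br a b) n = br a (br b n) - br b (br a n).
Proof. case: lie => _ _ _ Jac. have := Jac a b n.
rewrite (br_anti n (br a b)) (br_anti n a) brNr => /eqP.
move/eqP=> J. by rewrite -[RHS]subr0 -J opprD opprK addNKr. Qed.
End LieFacts.
Lemma zmodAC (V : zmodType) (a b c d : V) : -b - c + (a + d) = d - c + (a - b).
Proof. by rewrite addrC addrACA [RHS]addrC. Qed.

Unset Implicit Arguments.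
Theorem proposition4p1
  (K : fieldType) (charK0 : [pchar K] =i pred0)
  (L G Q : vectType K)
  (brL : L -> L -> L) (brG : G -> G -> G)
  (i : {linear G -> L}) (p : {linear L -> Q}) (actQ : G -> Q -> Q)
  (lieL : is_lie_bracket brL)
  (i_hom : forall x y, i (brG x y) = brL (i x) (i y))
  (i_inj : injective i)
  (p_surj : forall q, exists m, p m = q)
  (exact_mid : forall m, p m = 0 <-> exists x, m = i x)
  (actQ_def : forall x m, actQ x (p m) = p (brL (i x) m)) :
  (forall (j : {linear Q -> L}) (prg : {linear L -> G}),
      is_splitting i p j prg ->
      dg_LP_module brG (d2 p) (act2 brL i actQ) (alpha2 brL i j prg))
  /\
  (forall (j j' : {linear Q -> L}) (prg prg' : {linear L -> G}),
      is_splitting i p j prg -> is_splitting i p j' prg' ->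
      homotopic brG (d2 p) (act2 brL i actQ)
        (alpha2 brL i j prg) (alpha2 brL i j' prg'))
  /\
  (forall (j : {linear Q -> L}) (prg : {linear L -> G}),
      is_splitting i p j prg ->
      (forall m : L, d2 p 0 m = 0 <-> exists x, m = i x) /\
      (forall m : L, d2 p 0 m = 0 ->
         i (alpha2 brL i j prg 0 m (fun _ => 0)) = m)).
Proof.
have brG0r x : brG x 0 = 0 by apply: i_inj; rewrite i_hom !linear0 br0r.
have brGanti x y : brG x y = - brG y x.
  by apply: i_inj; rewrite linearN /= !i_hom (br_anti lieL).
have dCE0 k x : dCE brG k (fun _ => 0) x = 0.
  rewrite /dCE big1 ?add0r; last by move=> l _; rewrite brG0r scaler0.
  by rewrite big1 // => l _; rewrite big1 // => m _; rewrite scaler0.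
split.
  move=> j prg [Hpi Hpj Hdec].
  split.
  - split.
    + split; first by move=> [|[|k]] a u v /=; rewrite ?linearP // scaler0 addr0.
      by move=> [|[|k]].
    + split.
        move=> [|[|k]] x a u v /=.
        * by case: lieL => _ -> _ _.
        * case: (p_surj u) => m1 <-; case: (p_surj v) => m2 <-.
          by rewrite -linearP !actQ_def; case: lieL => _ -> _ _; rewrite linearP.
        * by rewrite scaler0 addr0.
      move=> [|[|k]] v a x y /=.
        * by rewrite linearP; case: lieL => -> _ _ _.
        * case: (p_surj v) => m <-.
          by rewrite !actQ_def linearP; case: lieL => -> _ _ _; rewrite linearP.
        * by rewrite scaler0 addr0.
    + move=> [|[|k]] x y v /=.
      * by rewrite i_hom (br_jac lieL).
      * case: (p_surj v) => m <-.
        by rewrite !actQ_def i_hom (br_jac lieL) linearB.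
      * by rewrite subr0.
    + by move=> [|[|k]] x v //=; rewrite actQ_def.
    + exists 2%N => -[|[|k]] //= _ v; exact: thinmx0.
  - move=> [|[|k]]; split.
    + by move=> a u v x /=; rewrite linearP.
    + by move=> v; split.
    + move=> a u v x /=. rewrite linearP; case: lieL => -> _ _ _; by rewrite linearP.
    + move=> v; split.
      * by move=> x y /= ->.
      * move=> [|n] // _ x a u w /=. rewrite /setarg /=.
        by rewrite linearP; case: lieL => _ -> _ _; rewrite linearP.
      * by move=> [|n] [|m].
    + by move=> a u v x /=; rewrite scaler0 addr0.
    + move=> v; rewrite /cochain /=; split => // *; by rewrite scaler0 addr0.
  - move=> [|[|k]] v x.
    + rewrite /dCE /= !big_ord1 big_mkcond big_ord1 /= addr0 expr0 !scale1r.
      rewrite -{2}(Hdec v) (brDr lieL) -i_hom !linearD /= Hpi.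
      by rewrite (br_anti lieL (i (x 0%N))) linearN /= addrC subrK.
    + rewrite /dCE /= add0r.
      under [X in _ = _ + X]eq_bigr do rewrite big_mkcond.
      rewrite !big_ord_recl !big_ord0 /= /skip1 /bump /= ?add0n ?addn0.
      rewrite expr0 expr1 !scale1r !scaleN1r !addr0 !add0r.
      have Hdec' w : j (p w) = w - i (prg w) by rewrite -{2}(Hdec w) addrAC subrr add0r.
      have E1 y z : prg (brL (j (actQ y v)) (i z)) =
          prg (brL (brL (i y) (j v)) (i z)) - brG (prg (brL (i y) (j v))) z.
        by rewrite -{1}(Hpj v) actQ_def Hdec' (brBl lieL) -i_hom linearB /= Hpi.
      rewrite !E1 i_hom.
      set x0 := x 0%N; set x1 := x 1%N; set n := j v.
      rewrite !(br_anti lieL (brL (i _) n)) !linearN /=.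
      rewrite (br_anti lieL n (brL _ _)) (br_jac lieL) linearN linearB /=.
      rewrite (br_anti lieL n (i x1)) (br_anti lieL n (i x0)) !linearN /=.
      have brGNr a b : brG a (- b) = - brG a b.
        by apply: i_inj; rewrite linearN /= !i_hom linearN (brNr lieL).
      rewrite !brGNr (brGanti x0) (brGanti x1) !opprK linearB /=.
      exact: zmodAC.
    + rewrite /= dCE0 add0r big1 // => l _; exact: scaler0.
have brGNr a b : brG a (- b) = - brG a b.
  by apply: i_inj; rewrite linearN /= !i_hom linearN (brNr lieL).
split; last first.
  move=> j prg [_ _ Hdec]; split => m; first exact: exact_mid.
  by move=> /= Hm; rewrite -{2}(Hdec m) Hm linear0 addr0.
move=> j j' prg prg' [Hpi Hpj Hdec] [Hpi' Hpj' Hdec'].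
have Hpj0 q : prg (j q) = 0.
  apply: i_inj; rewrite linear0; apply: (@addIr _ (j q)).
  by rewrite add0r -{3}(Hdec (j q)) Hpj.
have Hpj0' q : prg' (j' q) = 0.
  apply: i_inj; rewrite linear0; apply: (@addIr _ (j' q)).
  by rewrite add0r -{3}(Hdec' (j' q)) Hpj'.
exists (fun k => match k return V2 L Q k.+1 -> (nat -> G) -> G with
   | 0 => fun b _ => prg' (j b) - prg (j b) | _ => fun _ _ => 0 end).
split.
  move=> [|k]; split.
  - move=> a u v x /=; by rewrite !linearP /= scalerBr scalerN addrACA.
  - by move=> v; split.
  - by move=> a u v x /=; rewrite scaler0 addr0.
  - by move=> v; rewrite /cochain /=; split => // *; rewrite scaler0 addr0.
move=> [|[|k]] v x /=.
- by rewrite Hpj0 subr0 -{1}(Hdec v) linearD /= Hpi' addrAC subrr add0r.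
- rewrite /dCE /= !big_ord1 big_mkcond big_ord1 /= addr0 expr0 !scale1r add0r !Hpj0 !subr0.
  have Hd2 w : j (p w) = w - i (prg w) by rewrite -{2}(Hdec w) addrAC subrr add0r.
  have HA : prg' (j (actQ (x 0%N) v)) =
      prg' (brL (i (x 0%N)) (j v)) - prg (brL (i (x 0%N)) (j v)).
    by rewrite -{1}(Hpj v) actQ_def Hd2 linearB /= Hpi'.
  have Hy : prg' (j v) = - prg (j' v).
    have := Hpj0' v; rewrite -{1}(Hdec (j' v)) Hpj' linearD /= Hpi' => /eqP.
    by rewrite addr_eq0 => /eqP ->; rewrite opprK.
  rewrite HA Hy -{1}(Hdec (j' v)) Hpj' (brDl lieL) -i_hom linearD /= Hpi'.
  rewrite (br_anti lieL (j v)) !linearN /= (brGanti _ (x 0%N)) brGNr.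
  by rewrite opprK opprB addrAC -addrA.
- rewrite dCE0 big1 ?subrr ?addr0 ?subr0 // => l _; exact: scaler0.
Qed.
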